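(* Let $Q$ be an acyclic quiver and $W=0$ (so $\mathcal{A}=\mathrm{rep}(Q)$). Then $(Q,W)$ is genteel: the only self-stable objects of $\mathcal{A}$ are the simple representations $S_i$, $i\in V(Q)$.
   Context: $Q$ is a quiver with finite vertex set $V(Q)$; acyclic means it has no oriented cycles. $\mathcal{A}$ is the category of finite-dimensional representations of $Q$, $S_i$ the one-dimensional simple representation at vertex $i$. $N=\mathbb{Z}^{V(Q)}$ with basis $(e_i)$, $[E]\in N$ the dimension vector. The skew form $\langle-,-\rangle$ on $N$ is $\langle e_i,e_j\rangle=a_{ji}-a_{ij}$, where $a_{ij}$ is the number of arrows from $i$ to $j$; write $\langle A,B\rangle=\langle[A],[B]\rangle$. For $\theta\in\mathrm{Hom}(N,\mathbb{R})$, a nonzero object $E$ is $\theta$-stable if $\theta(E)=0$ and every proper nonzero subobject $A\subset E$ satisfies $\theta(A)<0$. An object $E$ is self-stable if it is $\theta$-stable for $\theta=\langle-,[E]\rangle$ (equivalently, $E\neq0$ and every non-trivial short exact sequence $0\to A\to E\to B\to0$ has $\langle A,B\rangle<0$). A quiver with potential is genteel if the only self-stable objects are of the form $S_i$. *)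

(* Defs.v *)
From HB Require Import structures.
From mathcomp Require Import all_boot all_order all_algebra.
Set Implicit Arguments. Unset Strict Implicit. Unset Printing Implicit Defensive.
Import Order.TTheory GRing.Theory Num.Theory.
Local Open Scope ring_scope.

Record quiver := Quiver {
  qV : finType;
  qA : finType;
  qsrc : qA -> qV;
  qtgt : qA -> qV }.

Definition is_oriented_cycle (Q : quiver) (p : seq (qA Q)) : bool :=
  match p with
  | [::] => false
  | a :: p' => path (fun x y => qtgt x == qsrc y) a p'
               && (qtgt (last a p') == qsrc a)
  end.

Definition acyclic (Q : quiver) : Prop :=
  forall p : seq (qA Q), ~~ is_oriented_cycle p.

Definition narrows (Q : quiver) (i j : qV Q) : nat :=
  #|[set a : qA Q | (qsrc a == i) && (qtgt a == j)]|.

Definition skew (Q : quiver) (x y : qV Q -> int) : int :=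
  \sum_(i : qV Q) \sum_(j : qV Q)
     x i * y j * ((narrows j i)%:Z - (narrows i j)%:Z).

(* finite-dimensional representations (row-vector convention:
   the map of arrow a acts by v |-> v *m rmap a) *)
Record rep (K : fieldType) (Q : quiver) := Rep {
  rdim : qV Q -> nat;
  rmap : forall a : qA Q, 'M[K]_(rdim (qsrc a), rdim (qtgt a)) }.

Definition dimvec (K : fieldType) (Q : quiver) (E : rep K Q) : qV Q -> int :=
  fun i => (rdim E i)%:Z.

Definition is_subrep (K : fieldType) (Q : quiver) (E : rep K Q)
  (U : forall i : qV Q, 'M[K]_(rdim E i)) : Prop :=
  forall a : qA Q, (U (qsrc a) *m rmap E a <= U (qtgt a))%MS.

Definition subdimvec (K : fieldType) (Q : quiver) (E : rep K Q)
  (U : forall i : qV Q, 'M[K]_(rdim E i)) : qV Q -> int :=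
  fun i => (\rank (U i))%:Z.

Definition rep_nonzero (K : fieldType) (Q : quiver) (E : rep K Q) : Prop :=
  exists i, (0 < rdim E i)%N.

Definition sub_nonzero (K : fieldType) (Q : quiver) (E : rep K Q)
  (U : forall i : qV Q, 'M[K]_(rdim E i)) : Prop :=
  exists i, (0 < \rank (U i))%N.

Definition sub_proper (K : fieldType) (Q : quiver) (E : rep K Q)
  (U : forall i : qV Q, 'M[K]_(rdim E i)) : Prop :=
  exists i, (\rank (U i) < rdim E i)%N.

Definition eval_theta (Q : quiver) (theta : qV Q -> int) (x : qV Q -> int) : int :=
  \sum_(i : qV Q) theta i * x i.

Definition theta_stable (K : fieldType) (Q : quiver) (theta : qV Q -> int)
  (E : rep K Q) : Prop :=
  [/\ rep_nonzero E,
      eval_theta theta (dimvec E) = 0 &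
      forall U : (forall i : qV Q, 'M[K]_(rdim E i)), is_subrep U -> sub_nonzero U -> sub_proper U ->
        eval_theta theta (subdimvec U) < 0].

(* self-stable: theta-stable for theta = < - , [E] > *)
Definition self_stable (K : fieldType) (Q : quiver) (E : rep K Q) : Prop :=
  theta_stable (fun i : qV Q =>
                  skew (fun j : qV Q => (i == j)%:Z) (dimvec E)) E.

Definition simple_rep (K : fieldType) (Q : quiver) (i : qV Q) : rep K Q :=
  @Rep K Q (fun j => nat_of_bool (j == i)) (fun a => 0).

Definition rep_iso (K : fieldType) (Q : quiver) (E F : rep K Q) : Prop :=
  exists f : forall i : qV Q, 'M[K]_(rdim E i, rdim F i),
    (forall i, row_free (f i) && row_full (f i)) /\
    (forall a : qA Q, rmap E a *m f (qtgt a) = f (qsrc a) *m rmap F a).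

Definition genteel (K : fieldType) (Q : quiver) : Prop :=
  forall E : rep K Q, self_stable E -> exists i : qV Q, rep_iso E (simple_rep K i).

(* Main.v *)
Require Import Defs.
From mathcomp Require Import all_boot all_order all_algebra.
Set Implicit Arguments. Unset Strict Implicit. Unset Printing Implicit Defensive.
Import Order.TTheory GRing.Theory Num.Theory.
Local Open Scope ring_scope.

Lemma path_iota (Q : quiver) (f : nat -> qA Q)
  (hf : forall k, qtgt (f k) = qsrc (f k.+1)) n x :
  path (fun a b => qtgt a == qsrc b) (f x) (map f (iota x.+1 n))
  && (last (f x) (map f (iota x.+1 n)) == f (x + n)%N).
Proof.
elim: n x => [|n IH] x /=; first by rewrite addn0 eqxx.
by rewrite hf eqxx /= addnS -addSn; exact: IH.
Qed.

Lemma exists_sink (Q : quiver) (hQ : acyclic Q) (S : pred (qV Q)) v0 :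
  v0 \in S -> exists2 v, v \in S & forall a, qsrc a = v -> qtgt a \notin S.
Proof.
move=> v0S.
case: (boolP [exists v, (v \in S) && [forall a, (qsrc a == v) ==> (qtgt a \notin S)]]).
  case/existsP => v /andP [vS /forallP H]; exists v => // a ea.
  by move: (H a); rewrite ea eqxx.
rewrite negb_exists => /forallP H.
have Hv : forall v, v \in S -> exists a, (qsrc a == v) && (qtgt a \in S).
  move=> v vS; move: (H v); rewrite vS /= negb_forall => /existsP [a].
  by rewrite negb_imply negbK => ha; exists a.
have [a0 _] := Hv v0 v0S.
pose nxt v := odflt a0 [pick a | (qsrc a == v) && (qtgt a \in S)].
have nxtP : forall v, v \in S -> (qsrc (nxt v) == v) && (qtgt (nxt v) \in S).
  move=> v vS; rewrite /nxt; case: pickP => [a //|Hn].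
  by have [a ha] := Hv v vS; rewrite Hn in ha.
pose w k := iter k (fun v => qtgt (nxt v)) v0.
have wS : forall k, w k \in S.
  elim=> [//|k IH]; rewrite /w iterS -/(w k).
  by case/andP: (nxtP _ IH).
pose arr k := nxt (w k).
have harr : forall k, qtgt (arr k) = qsrc (arr k.+1).
  by move=> k; rewrite /arr; case/andP: (nxtP _ (wS k.+1)) => /eqP -> _.
have hsrc : forall k, qsrc (arr k) = w k.
  by move=> k; case/andP: (nxtP _ (wS k)) => /eqP.
have [i [j [ij wij]]] : exists i j, (i < j)%N /\ w i = w j.
  case: (boolP [exists i : 'I_(#|qV Q|.+1), exists j : 'I_(#|qV Q|.+1),
                  (i != j) && (w i == w j)]).
    case/existsP => i /existsP [j /andP [nij /eqP wij]].
    case: (ltngtP i j) => [lt|gt|eq].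
    - by exists i, j.
    - by exists j, i.
    - by case/eqP: nij; apply: val_inj.
  rewrite negb_exists => /forallP Hn; exfalso.
  have inj : injective (fun k : 'I_(#|qV Q|.+1) => w k).
    move=> i j wij; apply/eqP; move: (Hn i); rewrite negb_exists => /forallP /(_ j).
    by rewrite wij eqxx andbT negbK.
  by have := leq_card _ inj; rewrite card_ord ltnn.
have := hQ (arr i :: map arr (iota i.+1 (j - i.+1))).
rewrite /is_oriented_cycle.
case/andP: (path_iota harr (j - i.+1) i) => -> /eqP ->.
by rewrite /= harr hsrc hsrc -addSn (subnKC ij) wij eqxx.
Qed.

Lemma theta_i_ge0 (K : fieldType) (Q : quiver) (E : rep K Q) i
  (hi : forall a, qsrc a = i -> rdim E (qtgt a) = 0%N) :
  0 <= Defs.skew (fun j => (i == j)%:Z) (dimvec E).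
Proof.
rewrite /Defs.skew; apply: sumr_ge0 => k _; apply: sumr_ge0 => j _.
have [<-|nik] := eqVneq i k; last by rewrite !mul0r.
rewrite mul1r.
case: (posnP (narrows i j)) => [->|].
  by rewrite subr0 mulr_ge0.
rewrite card_gt0 => /set0Pn [a]; rewrite inE => /andP [/eqP ha /eqP ta].
by have := hi a ha; rewrite ta /dimvec => ->; rewrite mul0r.
Qed.

Lemma eval_ge0 (K : fieldType) (Q : quiver) (E : rep K Q) i (theta : qV Q -> int)
  (U : forall j, 'M[K]_(rdim E j)) (hU : forall j, j != i -> U j = 0)
  (ht : 0 <= theta i) : 0 <= eval_theta theta (subdimvec U).
Proof.
rewrite /eval_theta; apply: sumr_ge0 => k _.
case: (eqVneq k i) => [->|nki]; first by rewrite mulr_ge0.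
by rewrite /subdimvec (hU k nki) mxrank0 mulr0.
Qed.

Lemma subrep_at (K : fieldType) (Q : quiver) (E : rep K Q) i
  (hi : forall a, qsrc a = i -> rdim E (qtgt a) = 0%N)
  (U : forall j, 'M[K]_(rdim E j)) (hU : forall j, j != i -> U j = 0) :
  is_subrep U.
Proof.
move=> a; case: (eqVneq (qsrc a) i) => [ha|na].
  apply: submx_full; rewrite /row_full eqn_leq rank_leq_col /=.
  exact: (leq_trans (eq_leq (hi a ha)) (leq0n _)).
by rewrite (hU _ na) mul0mx sub0mx.
Qed.

Theorem mainTheorem14 (K : fieldType) (Q : quiver) (hQ : acyclic Q) :
  genteel K Q.
Proof.
move=> E [Ene Eeval Estab].
have [v0 v0S] := Ene.
have [i iS hi'] := @exists_sink Q hQ [pred v | (0 < rdim E v)%N] v0 v0S.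
rewrite inE /= in iS.
have hi : forall a, qsrc a = i -> rdim E (qtgt a) = 0%N.
  by move=> a /hi'; rewrite inE /= -eqn0Ngt => /eqP.
have th := theta_i_ge0 hi.
have key : forall U : (forall j, 'M[K]_(rdim E j)),
    (forall j, j != i -> U j = 0) -> sub_nonzero U -> ~ sub_proper U.
  move=> U hU nz pr; have := Estab U (subrep_at hi hU) nz pr.
  by rewrite ltNge (eval_ge0 hU th).
have dj : forall j, j != i -> rdim E j = 0%N.
  move=> j nji; case: (posnP (rdim E j)) => // pj; exfalso.
  pose U1 := fun k : qV Q => (if k == i then 1%:M else 0 : 'M[K]_(rdim E k)).
  apply: (key U1).
  - by move=> k nk; rewrite /U1 (negbTE nk).
  - by exists i; rewrite /U1 eqxx mxrank1.
  - by exists j; rewrite /U1 (negbTE nji) mxrank0.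
have di : rdim E i = 1%N.
  case: (ltngtP (rdim E i) 1) => // h.
    by move: iS; rewrite lt0n; move: h; rewrite ltnS leqn0 => ->.
  exfalso.
  pose U2 := fun k : qV Q => (if k == i then pid_mx 1 else 0 : 'M[K]_(rdim E k)).
  apply: (key U2).
  - by move=> k nk; rewrite /U2 (negbTE nk).
  - by exists i; rewrite /U2 eqxx rank_pid_mx // ltnW.
  - by exists i; rewrite /U2 eqxx rank_pid_mx // ltnW.
have dall : forall j, rdim E j = (j == i).
  by move=> j; case: eqVneq => [->|nji]; [exact: di | exact: dj].
exists i; exists (fun j => pid_mx (rdim E j)); split.
  move=> j; rewrite /row_free /row_full /= rank_pid_mx ?leqnn ?dall //.
  by rewrite !eqxx.
move=> a /=; rewrite mulmx0.
have noloop : qtgt a != qsrc a by have := hQ [:: a]; rewrite /is_oriented_cycle /=.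
apply/matrixP => r c; exfalso.
case: (eqVneq (qsrc a) i) => [hs|ns].
  rewrite hs in noloop.
  by case: c => m; rewrite (negbTE noloop).
by case: r => m; rewrite (dj _ ns).
Qed.
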